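(* Let $P\in\mathbb{R}^{n\times n}$ be a sub-stochastic matrix, $\gamma\in[0,1)$, $c\in\mathbb{R}^n$ arbitrary, and $v\in\mathbb{R}^n$ the unique solution of $v=c+\gamma Pv$. Let $\pi\in\mathbb{R}^n$ be a sub-stochastic vector and $z\in\mathbb{R}$ a scalar such that $v_k>z+\gamma\pi^Tv$ for some $k\in\{1,\dots,n\}$. Let $\widehat P$ be the matrix obtained from $P$ by replacing its $k$-th row with $\pi^T$, $\widehat c$ the vector obtained from $c$ by replacing its $k$-th entry with $z$, and $\widehat v$ the unique solution of $\widehat v=\widehat c+\gamma\widehat P\widehat v$. Then $$\widehat v_k<c_k+\gamma\sum_{j=1}^nP_{kj}\widehat v_j .$$
   Context: A sub-stochastic matrix is a matrix with nonnegative entries and all row sums at most $1$. A sub-stochastic vector is a nonnegative vector whose entries sum to at most $1$. *)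

(* Defs.v *)
From HB Require Import structures.
From mathcomp Require Import all_boot all_order all_algebra.
Set Implicit Arguments. Unset Strict Implicit. Unset Printing Implicit Defensive.
Import Order.TTheory GRing.Theory Num.Theory.
Local Open Scope ring_scope.

Definition substochastic_mx (R : numDomainType) (n : nat) (P : 'M[R]_n) : Prop :=
  (forall i j, 0 <= P i j) /\ (forall i, \sum_(j < n) P i j <= 1).

Definition substochastic_vec (R : numDomainType) (n : nat) (p : 'cV[R]_n) : Prop :=
  (forall i, 0 <= p i 0) /\ \sum_(i < n) p i 0 <= 1.

Definition replace_row (R : Type) (n : nat) (P : 'M[R]_n) (k : 'I_n) (p : 'cV[R]_n)
  : 'M[R]_n := \matrix_(i, j) (if i == k then p j 0 else P i j).

Definition replace_entry (R : Type) (n : nat) (c : 'cV[R]_n) (k : 'I_n) (z : R)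
  : 'cV[R]_n := \col_i (if i == k then z else c i 0).

(* Main.v *)
Require Import Defs.
From HB Require Import structures.
From mathcomp Require Import all_boot all_order all_algebra.
From mathcomp Require Import ring lra.
Import Order.TTheory GRing.Theory Num.Theory.
Local Open Scope ring_scope.

Lemma cmp (R : realFieldType) (n : nat) (Q : 'M[R]_n) (g : R) (a u w : 'cV[R]_n) :
  substochastic_mx Q -> 0 <= g -> g < 1 ->
  (forall i, a i 0 + g * \sum_(j < n) Q i j * u j 0 <= u i 0) ->
  (forall i, w i 0 = a i 0 + g * \sum_(j < n) Q i j * w j 0) ->
  forall i, w i 0 <= u i 0.
Proof.
move=> [Q0 Q1] g0 g1 Hu Hw.
set d := fun j => w j 0 - u j 0.
set M := \big[Order.max/0]_(j < n) d j.
have M0 : 0 <= M by apply: bigmax_ge_id.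
have Hd : forall i, d i <= g * M.
  move=> i; rewrite /d.
  have := Hu i; rewrite (Hw i) => Hui.
  have -> : a i 0 + g * \sum_(j < n) Q i j * w j 0 - u i 0 =
     (a i 0 + g * \sum_(j < n) Q i j * u j 0 - u i 0) +
      g * \sum_(j < n) Q i j * d j.
    have -> : \sum_(j < n) Q i j * d j = \sum_(j < n) Q i j * w j 0 - \sum_(j < n) Q i j * u j 0.
      by rewrite -sumrB; apply: eq_bigr => j _; rewrite /d mulrBr.
    ring.
  have h1 : a i 0 + g * \sum_(j < n) Q i j * u j 0 - u i 0 <= 0 by rewrite subr_le0.
  have h2 : \sum_(j < n) Q i j * d j <= M.
    apply: (@le_trans _ _ (\sum_(j < n) Q i j * M)).
      apply: ler_sum => j _; apply: ler_wpM2l => //.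
      exact: (le_bigmax 0 d j).
    rewrite -mulr_suml; apply: ler_piMl => //.
  have h3 : g * \sum_(j < n) Q i j * d j <= g * M by apply: ler_wpM2l.
  lra.
have HM : M <= g * M.
  apply: bigmax_le; first exact: mulr_ge0.
  by move=> j _; apply: Hd.
have HM0 : M <= 0 by nra.
move=> i; have : d i <= M := le_bigmax 0 d i.
rewrite /d; lra.
Qed.

Theorem lemma6 (R : realFieldType) (n : nat) (P : 'M[R]_n) (gamma : R)
  (c v : 'cV[R]_n) (p : 'cV[R]_n) (z : R) (k : 'I_n) (vh : 'cV[R]_n) :
  substochastic_mx P ->
  0 <= gamma -> gamma < 1 ->
  v = c + gamma *: (P *m v) ->
  substochastic_vec p ->
  z + gamma * (p^T *m v) 0 0 < v k 0 ->
  vh = replace_entry c k z + gamma *: (replace_row P k p *m vh) ->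
  vh k 0 < c k 0 + gamma * \sum_(j < n) P k j * vh j 0.
Proof.
move=> HP g0 g1 Hv Hp Hk Hvh.
set Ph := replace_row P k p; set ch := replace_entry c k z.
have HPh : substochastic_mx Ph.
  case: HP => P0 P1; case: Hp => p0 p1; split.
    by move=> i j; rewrite /Ph mxE; case: ifP.
  move=> i; rewrite (eq_bigr (fun j => if i == k then p j 0 else P i j)); last by move=> j _; rewrite mxE.
  by case: (i == k).
have Ev : forall i, v i 0 = c i 0 + gamma * \sum_(j < n) P i j * v j 0.
  by move=> i; rewrite {1}Hv !mxE.
have Evh : forall i, vh i 0 = ch i 0 + gamma * \sum_(j < n) Ph i j * vh j 0.
  by move=> i; rewrite {1}Hvh !mxE.
have Epv : (p^T *m v) 0 0 = \sum_(j < n) p j 0 * v j 0.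
  by rewrite mxE; apply: eq_bigr => j _; rewrite mxE.
have Rk : forall i (f : 'cV[R]_n), \sum_(j < n) Ph i j * f j 0 =
   if i == k then \sum_(j < n) p j 0 * f j 0 else \sum_(j < n) P i j * f j 0.
  move=> i f; case: ifP => ik; apply: eq_bigr => j _; by rewrite /Ph mxE ik.
have Ck : forall i, ch i 0 = if i == k then z else c i 0.
  by move=> i; rewrite /ch mxE.
have le1 : forall i, vh i 0 <= v i 0.
  apply: (@cmp _ _ Ph gamma ch v vh HPh g0 g1 _ Evh) => i.
  rewrite Rk Ck; case: eqP => [->|_]; first by rewrite -Epv; apply: ltW.
  by rewrite -Ev.
rewrite real_ltNge ?num_real //; apply/negP => Hc.
have le2 : forall i, v i 0 <= vh i 0.
  apply: (@cmp _ _ P gamma c vh v HP g0 g1 _ Ev) => i.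
  case: (eqVneq i k) => [->|ik] //.
  by rewrite Evh Rk Ck (negbTE ik).
have Eq : forall i, v i 0 = vh i 0 by move=> i; apply/eqP; rewrite eq_le le1 le2.
have := Evh k; rewrite Rk Ck eqxx.
have -> : \sum_(j < n) p j 0 * vh j 0 = \sum_(j < n) p j 0 * v j 0.
  by apply: eq_bigr => j _; rewrite Eq.
rewrite -Epv -Eq => E; move: Hk; rewrite -E ltxx.
done.
Qed.
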